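(* Let $p\ge1$, $m=2p$, $j=\mathrm{diag}(I_p,-I_p)$, $n>0$. Let $A$ be an $n\times n$ matrix with $\det A\neq0$, $S_0$ an $n\times n$ matrix and $\Pi_0$ an $n\times m$ matrix with $AS_0-S_0A^*=i\Pi_0j\Pi_0^*$. Define for $k\ge0$ $$\Pi_{k+1}=\Pi_k+iA^{-1}\Pi_kj,\qquad S_{k+1}=S_k+A^{-1}S_k(A^* )^{-1}+A^{-1}\Pi_k\Pi_k^*(A^* )^{-1}.$$ If $S_0>0$, then $S_k>0$ for all $k\ge0$ and $C_k:=I_m+\Pi_k^*S_k^{-1}\Pi_k-\Pi_{k+1}^*S_{k+1}^{-1}\Pi_{k+1}>0$ for all $k\ge0$.
   Context: $I_r$ denotes the $r\times r$ identity matrix; $>0$ means positive definite. *)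

(* Defs.v *)
From HB Require Import structures.
From mathcomp Require Import all_boot all_order all_algebra.
Set Implicit Arguments. Unset Strict Implicit. Unset Printing Implicit Defensive.
Import Order.TTheory GRing.Theory Num.Theory.
Local Open Scope ring_scope.

Definition hconj (C : numClosedFieldType) (r c : nat) (M : 'M[C]_(r, c))
  : 'M[C]_(c, r) := (map_mx Num.conj M)^T.

Definition posdef (C : numClosedFieldType) (n : nat) (M : 'M[C]_n) : Prop :=
  M = hconj M /\
  forall x : 'cV[C]_n, x != 0 -> 0 < (hconj x *m M *m x) 0 0.

Definition jmx (C : numClosedFieldType) (p : nat) : 'M[C]_(p + p) :=
  block_mx 1%:M 0 0 (- 1%:M).

Fixpoint PiS (C : numClosedFieldType) (n p : nat) (A S0 : 'M[C]_n)
  (Pi0 : 'M[C]_(n, p + p)) (k : nat) : 'M[C]_(n, p + p) * 'M[C]_n :=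
  match k with
  | O => (Pi0, S0)
  | k'.+1 =>
    let: (Pi, Sm) := PiS A S0 Pi0 k' in
    (Pi + 'i *: (invmx A *m Pi *m jmx C p),
     Sm + invmx A *m Sm *m invmx (hconj A)
       + invmx A *m Pi *m hconj Pi *m invmx (hconj A))
  end.

Definition Pik (C : numClosedFieldType) (n p : nat) (A S0 : 'M[C]_n)
  (Pi0 : 'M[C]_(n, p + p)) (k : nat) := (PiS A S0 Pi0 k).1.
Definition Sk (C : numClosedFieldType) (n p : nat) (A S0 : 'M[C]_n)
  (Pi0 : 'M[C]_(n, p + p)) (k : nat) := (PiS A S0 Pi0 k).2.

(* Main.v *)
Require Import Defs.
From HB Require Import structures.
From mathcomp Require Import all_boot all_order all_algebra.
From mathcomp Require Import ring.
Import Order.TTheory GRing.Theory Num.Theory.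
Local Open Scope ring_scope.

Section H.
Variable C : numClosedFieldType.

Lemma hconjM m n k (A : 'M[C]_(m, n)) (B : 'M[C]_(n, k)) :
  hconj (A *m B) = hconj B *m hconj A.
Proof. by rewrite /hconj map_mxM trmx_mul. Qed.

Lemma hconjK m n (A : 'M[C]_(m, n)) : hconj (hconj A) = A.
Proof. by apply/matrixP => i j; rewrite !mxE conjCK. Qed.

Lemma hconjD m n (A B : 'M[C]_(m, n)) : hconj (A + B) = hconj A + hconj B.
Proof. by apply/matrixP => i j; rewrite !mxE rmorphD. Qed.

Lemma hconjN m n (A : 'M[C]_(m, n)) : hconj (- A) = - hconj A.
Proof. by apply/matrixP => i j; rewrite !mxE rmorphN. Qed.

Lemma hconjZ m n a (A : 'M[C]_(m, n)) : hconj (a *: A) = a^* *: hconj A.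
Proof. by apply/matrixP => i j; rewrite !mxE rmorphM. Qed.

Lemma hconj1 n : hconj (1%:M : 'M[C]_n) = 1%:M.
Proof. by apply/matrixP => i j; rewrite !mxE eq_sym rmorph_nat. Qed.

Lemma hconj0 m n : hconj (0 : 'M[C]_(m, n)) = 0.
Proof. by apply/matrixP => i j; rewrite !mxE rmorph0. Qed.

Lemma hconjV n (A : 'M[C]_n) : hconj (invmx A) = invmx (hconj A).
Proof. by rewrite /hconj map_invmx trmx_inv. Qed.

Lemma hconj_j p : hconj (jmx C p) = jmx C p.
Proof.
rewrite /jmx /hconj map_block_mx tr_block_mx.
by rewrite map_mxN map_mx1 !map_mx0 !trmx0 linearN /= trmx1.
Qed.

Lemma jmxK p : jmx C p *m jmx C p = 1%:M.
Proof.
rewrite /jmx mulmx_block !mulmx0 !mul0mx !mulmx1 !addr0 !add0r mulmxN mulmx1 opprK.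
by rewrite [RHS]scalar_mx_block.
Qed.

Lemma eD m n (A B : 'M[C]_(m, n)) i j : (A + B) i j = A i j + B i j.
Proof. by rewrite mxE. Qed.
Lemma eN m n (A : 'M[C]_(m, n)) i j : (- A) i j = - A i j.
Proof. by rewrite mxE. Qed.
Lemma eZ m n a (A : 'M[C]_(m, n)) i j : (a *: A) i j = a * A i j.
Proof. by rewrite mxE. Qed.

Lemma jK' m p (X : 'M[C]_(m, p + p)) : X *m jmx C p *m jmx C p = X.
Proof. by rewrite -mulmxA jmxK mulmx1. Qed.

Lemma key n q (B S : 'M[C]_n) (Pi : 'M[C]_(n, q + q)) (x : 'cV[C]_n) (y : 'cV[C]_(q + q)) :
  S \in unitmx -> hconj S = S ->
  let Si := invmx S in
  let j := jmx C q in
  let Pi' := Pi + 'i *: (B *m Pi *m j) in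
  let S' := S + B *m S *m hconj B + B *m Pi *m hconj Pi *m hconj B in
  let w1 := x + Si *m Pi *m y in
  let w2 := hconj B *m x in
  let w3 := hconj Pi *m hconj B *m x + 'i *: (j *m y) in
  hconj x *m S' *m x + hconj x *m Pi' *m y + hconj y *m hconj Pi' *m x
    + hconj y *m (1%:M + hconj Pi *m Si *m Pi) *m y
  = hconj w1 *m S *m w1 + hconj w2 *m S *m w2 + hconj w3 *m w3.
Proof.
move=> Su hS Si j Pi' S' w1 w2 w3.
have hSi : hconj Si = Si by rewrite /Si hconjV hS.
rewrite /w1 /w2 /w3 /Pi' /S' /j.
rewrite !(hconjD, hconjM, hconjZ, hconjK, hconj_j, hSi, conjCi).
rewrite !(mulmxDl, mulmxDr, mulmxN, mulNmx, mul1mx, mulmx1).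
rewrite -!(scalemxAl, scalemxAr) !mulmxA !scalerA.
rewrite /Si !mulmxK // !mulmxKV // !jK'.
rewrite mulNr -expr2 sqrCi opprK scale1r.
apply/matrixP => i k.
rewrite !(eD, eN, eZ).
ring.
Qed.

Lemma gramE n (w : 'cV[C]_n) : (hconj w *m w) 0 0 = \sum_k `|w k 0| ^+ 2.
Proof. by rewrite mxE; apply: eq_bigr => k _; rewrite !mxE normCK mulrC. Qed.

Lemma gram_ge0 n (w : 'cV[C]_n) : 0 <= (hconj w *m w) 0 0.
Proof. by rewrite gramE; apply: sumr_ge0 => k _; rewrite exprn_ge0. Qed.

Lemma gram_gt0 n (w : 'cV[C]_n) : w != 0 -> 0 < (hconj w *m w) 0 0.
Proof.
move=> nz; rewrite lt0r gram_ge0 andbT; apply: contra nz => /eqP.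
rewrite gramE => /psumr_eq0P H; apply/eqP/matrixP => i k.
rewrite (ord1 k) mxE; apply/eqP; rewrite -normr_eq0 -sqrf_eq0.
by rewrite H // => l _; rewrite exprn_ge0.
Qed.

Lemma pd_ge0 n (S : 'M[C]_n) (x : 'cV[C]_n) : posdef S -> 0 <= (hconj x *m S *m x) 0 0.
Proof.
case=> _ H; case: (eqVneq x 0) => [->|nz]; first by rewrite mulmx0 mxE.
exact/ltW/H.
Qed.

Lemma hconj_eq0 m n (A : 'M[C]_(m, n)) : (hconj A == 0) = (A == 0).
Proof.
apply/eqP/eqP => [h|->]; last exact: hconj0.
by rewrite -[A]hconjK h hconj0.
Qed.

Lemma pd_unit n (S : 'M[C]_n) : posdef S -> S \in unitmx.
Proof.
move=> [hS H]; rewrite unitmxE unitfE; apply/negP => /det0P [v nz hv].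
have := H (hconj v); rewrite hconj_eq0 => /(_ nz).
by rewrite hconjK hv mul0mx mxE ltxx.
Qed.

Lemma step_pd n m (B S : 'M[C]_n) (Pi : 'M[C]_(n, m)) :
  posdef S -> posdef (S + B *m S *m hconj B + B *m Pi *m hconj Pi *m hconj B).
Proof.
move=> pS; have [hS H] := pS; split.
  by rewrite !(hconjD, hconjM, hconjK) -hS !mulmxA.
move=> x nz.
have -> : hconj x *m (S + B *m S *m hconj B + B *m Pi *m hconj Pi *m hconj B) *m x
  = hconj x *m S *m x + hconj (hconj B *m x) *m S *m (hconj B *m x)
    + hconj (hconj Pi *m hconj B *m x) *m (hconj Pi *m hconj B *m x).
  by rewrite !(hconjM, hconjK, mulmxDl, mulmxDr) !mulmxA.
rewrite !eD -addrA ltr_pwDl ?H // addr_ge0 ?gram_ge0 //.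
exact: pd_ge0.
Qed.

Lemma C_pd n q (B S : 'M[C]_n) (Pi : 'M[C]_(n, q + q)) :
  B \in unitmx -> posdef S ->
  posdef (1%:M + hconj Pi *m invmx S *m Pi
   - hconj (Pi + 'i *: (B *m Pi *m jmx C q))
     *m invmx (S + B *m S *m hconj B + B *m Pi *m hconj Pi *m hconj B)
     *m (Pi + 'i *: (B *m Pi *m jmx C q))).
Proof.
move=> Bu pS.
have pS' := @step_pd _ _ B S Pi pS.
set S' := S + _ + _ in pS' *.
set Pi' := Pi + _.
have [hS Hs] := pS; have [hS' _] := pS'.
have Su := pd_unit _ _ pS; have S'u := pd_unit _ _ pS'.
split.
  rewrite [RHS]hconjD hconjN [hconj (1%:M + _)]hconjD !hconjM !hconjK hconj1 !hconjV -hS -hS' !mulmxA.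
  by [].
move=> y nz.
set x := - (invmx S' *m Pi' *m y).
have K : hconj x *m S' *m x + hconj x *m Pi' *m y + hconj y *m hconj Pi' *m x
    + hconj y *m (1%:M + hconj Pi *m invmx S *m Pi) *m y
  = hconj (x + invmx S *m Pi *m y) *m S *m (x + invmx S *m Pi *m y)
    + hconj (hconj B *m x) *m S *m (hconj B *m x)
    + hconj (hconj Pi *m hconj B *m x + 'i *: (jmx C q *m y))
       *m (hconj Pi *m hconj B *m x + 'i *: (jmx C q *m y))
  := @key _ _ B S Pi x y Su (esym hS).
have X : hconj x *m S' *m x + hconj x *m Pi' *m y + hconj y *m hconj Pi' *m x
   = - (hconj y *m hconj Pi' *m invmx S' *m Pi' *m y).
  rewrite /x hconjN !hconjM hconjV -hS'.
  rewrite !(mulNmx, mulmxN, opprK) !mulmxA mulmxKV //.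
  apply/matrixP => i k; rewrite !(eD, eN); ring.
have -> : hconj y *m (1%:M + hconj Pi *m invmx S *m Pi
   - hconj Pi' *m invmx S' *m Pi') *m y
   = hconj x *m S' *m x + hconj x *m Pi' *m y + hconj y *m hconj Pi' *m x
    + hconj y *m (1%:M + hconj Pi *m invmx S *m Pi) *m y.
  rewrite X !(mulmxDl, mulmxDr, mulNmx, mulmxN) !mulmxA.
  apply/matrixP => i k; rewrite !(eD, eN); ring.
rewrite K !eD.
have hBu : hconj B \in unitmx.
  have : hconj B *m hconj (invmx B) = 1%:M by rewrite -hconjM mulVmx // hconj1.
  by case/mulmx1_unit.
case: (eqVneq (hconj B *m x) 0) => [x0|nz2]; last first.
  rewrite -addrA ltr_wpDl ?pd_ge0 // ltr_pwDl ?gram_ge0 //.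
  by have [_ ->] := pS.
have {}x0 : x = 0 by rewrite -[x](mulKmx hBu) x0 mulmx0.
rewrite x0 !mulmx0 !add0r.
apply: ltr_wpDl; first by rewrite addr_ge0 ?(pd_ge0 _ _ _ pS) // mxE.
apply: (gram_gt0 _ ('i *: (jmx C q *m y))); rewrite scaler_eq0 negb_or neq0Ci /=.
apply: contra nz => /eqP jy; apply/eqP.
by rewrite -[y]mul1mx -(jmxK q) -mulmxA jy mulmx0.
Qed.

End H.

Lemma PiS_S (C : numClosedFieldType) n p (A S0 : 'M[C]_n) (Pi0 : 'M[C]_(n, p + p)) k :
  PiS A S0 Pi0 k.+1 =
   (Pik A S0 Pi0 k + 'i *: (invmx A *m Pik A S0 Pi0 k *m jmx C p),
    Sk A S0 Pi0 k + invmx A *m Sk A S0 Pi0 k *m invmx (hconj A)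
      + invmx A *m Pik A S0 Pi0 k *m hconj (Pik A S0 Pi0 k) *m invmx (hconj A)).
Proof. by rewrite /Pik /Sk /=; case: (PiS A S0 Pi0 k). Qed.

Theorem proposition3p1 (C : numClosedFieldType) (p n : nat)
  (A S0 : 'M[C]_n) (Pi0 : 'M[C]_(n, p + p)) :
  (1 <= p)%N -> (0 < n)%N -> \det A != 0 ->
  A *m S0 - S0 *m hconj A = 'i *: (Pi0 *m jmx C p *m hconj Pi0) ->
  posdef S0 ->
  (forall k : nat, posdef (Sk A S0 Pi0 k)) /\
  (forall k : nat,
     posdef (1%:M + hconj (Pik A S0 Pi0 k) *m invmx (Sk A S0 Pi0 k) *m Pik A S0 Pi0 k
             - hconj (Pik A S0 Pi0 k.+1) *m invmx (Sk A S0 Pi0 k.+1)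
               *m Pik A S0 Pi0 k.+1)).
Proof.
move=> _ _ dA _ pS0.
have Au : A \in unitmx by rewrite unitmxE unitfE.
have P1 : forall k, posdef (Sk A S0 Pi0 k).
  elim=> [|k IH]; first exact: pS0.
  by rewrite {1}/Sk PiS_S /= -hconjV; apply: step_pd.
split=> // k.
rewrite {3 4}/Pik {2}/Sk PiS_S /= -hconjV.
apply: C_pd; [by rewrite unitmx_inv | exact: P1].
Qed.
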